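(* Let the functions satisfy the $M=2$ system and the boundary conditions (B) (see context), assume $\eta_0'(s)\neq0$ and $y_2(s)\ne0$ for $s>0$, and define $G:=x_0/y_2$. Then $$\Big(3s\frac{G'}{G}+2e_1\Big)^2-4e_1^2=12\Big(\eta_0-e_2-3s\eta_0'-s\frac{\eta_0''}{\eta_0'}\Big)-12s^2\Big(\frac{\eta_0'''}{\eta_0'}-\frac34\Big(\frac{\eta_0''}{\eta_0'}\Big)^2\Big).$$ If moreover, as $s\to0^+$, $x_0(s)\sim -\dfrac{i s^{-\nu_0}}{\Gamma(\nu_1-\nu_0+1)\Gamma(\nu_2-\nu_0+1)}$ and $y_2(s)\sim \dfrac{i\Gamma(\nu_2-\nu_1)s^{\nu_1}}{\Gamma(\nu_1-\nu_0+1)}+\dfrac{i\Gamma(\nu_1-\nu_2)s^{\nu_2}}{\Gamma(\nu_2-\nu_0+1)}$, then $$G^{-1}\sim-\Gamma(\nu_2-\nu_1)\Gamma(\nu_2-\nu_0+1)s^{\nu_1+\nu_0}-\Gamma(\nu_1-\nu_2)\Gamma(\nu_1-\nu_0+1)s^{\nu_2+\nu_0}\quad(s\to0^+).$$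
   Context: Fix complex parameters $\nu_0,\nu_1,\nu_2$ with $\nu_2-\nu_1\notin\mathbb Z$, and let $e_1=\nu_0+\nu_1+\nu_2$, $e_2=\nu_0\nu_1+\nu_0\nu_2+\nu_1\nu_2$, $e_3=\nu_0\nu_1\nu_2$. The $M=2$ system is the following system for smooth complex-valued functions $x_0,x_1,x_2,y_0,y_1,y_2,\xi_0,\xi_1,\xi_2,\eta_0,\eta_1,\eta_2$ of $s\in(0,\infty)$, with $'=d/ds$: $sx_0'=-\eta_0x_0-x_1$, $sx_1'=-\eta_1x_0-x_2$, $sx_2'=-\eta_2x_0-sx_0+\xi_0x_0+\xi_1x_1+\xi_2x_2$, $sy_2'=-\xi_2y_2+y_1$, $sy_1'=-\xi_1y_2+y_0$, $sy_0'=-\xi_0y_2+sy_2+\eta_0y_0+\eta_1y_1+\eta_2y_2$, $\xi_0'=-x_0y_0$, $\xi_1'=-x_0y_1$, $\xi_2'=-x_0y_2$, $\eta_0'=-x_0y_2$, $\eta_1'=-x_1y_2$, $\eta_2'=-x_2y_2$. Boundary conditions (B): as $s\to0^+$, $\eta_0,\eta_1,\eta_2\to0$, $\xi_0\to-e_3$, $\xi_1\to e_2$, $\xi_2\to-e_1$, and $x_j(s)y_k(s)\to0$, $s\,x_j(s)y_k(s)\to0$ for all $j,k\in\{0,1,2\}$. *)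

(* Defs.v *)
From Stdlib Require Import Arith Reals Lra List ClassicalEpsilon.
Open Scope R_scope.

Definition Cplx : Type := (R * R)%type.
Definition RtoC (x : R) : Cplx := (x, 0).
Definition Ci : Cplx := (0, 1).
Definition Czero : Cplx := RtoC 0.
Definition Cone : Cplx := RtoC 1.
Definition Cadd (z w : Cplx) : Cplx := (fst z + fst w, snd z + snd w).
Definition Copp (z : Cplx) : Cplx := (- fst z, - snd z).
Definition Csub (z w : Cplx) : Cplx := Cadd z (Copp w).
Definition Cmul (z w : Cplx) : Cplx :=
  (fst z * fst w - snd z * snd w, fst z * snd w + snd z * fst w).
(* Cinv 0 = 0 *)
Definition Cinv (z : Cplx) : Cplx :=
  (fst z / (fst z ^ 2 + snd z ^ 2), - snd z / (fst z ^ 2 + snd z ^ 2)).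
Definition Cdiv (z w : Cplx) : Cplx := Cmul z (Cinv w).
Definition Cnorm (z : Cplx) : R := sqrt (fst z ^ 2 + snd z ^ 2).

Declare Scope C_scope.
Delimit Scope C_scope with C.
Bind Scope C_scope with Cplx.
Infix "+" := Cadd : C_scope.
Infix "-" := Csub : C_scope.
Infix "*" := Cmul : C_scope.
Infix "/" := Cdiv : C_scope.
Notation "- z" := (Copp z) : C_scope.
Notation "z ^2" := (Cmul z z) (at level 30) : C_scope.

Definition Cexp (z : Cplx) : Cplx := (exp (fst z) * cos (snd z), exp (fst z) * sin (snd z)).
Definition Cpow (t : R) (z : Cplx) : Cplx := Cexp (Cmul z (RtoC (ln t))).

Definition lim0 (f : R -> Cplx) (l : Cplx) : Prop :=
  forall eps, 0 < eps -> exists delta, 0 < delta /\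
    forall s, 0 < s < delta -> Cnorm (Csub (f s) l) < eps.

Definition asym0 (f g : R -> Cplx) : Prop := lim0 (fun s => Cdiv (f s) (g s)) Cone.

Definition Ccv (u : nat -> Cplx) (l : Cplx) : Prop :=
  forall eps, 0 < eps -> exists N, forall n, (n >= N)%nat -> Cnorm (Csub (u n) l) < eps.

(** Reciprocal Gamma function (entire) via Gauss' limit:
    1/Gamma(z) = lim_n z (z+1) ... (z+n) / (n! n^z). *)
Fixpoint Cpoch (z : Cplx) (n : nat) : Cplx :=
  match n with
  | O => z
  | S m => Cmul (Cpoch z m) (Cadd z (RtoC (INR (S m))))
  end.
Definition rgamma_seq (z : Cplx) (n : nat) : Cplx :=
  Cdiv (Cpoch z n) (Cmul (RtoC (INR (Factorial.fact n))) (Cpow (INR n) z)).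
Definition rGamma (z : Cplx) : Cplx :=
  epsilon (inhabits Czero) (fun l => Ccv (rgamma_seq z) l).
(** Gamma = 1 / rGamma (equal to 0 at the poles, by the convention Cinv 0 = 0). *)
Definition Gamma (z : Cplx) : Cplx := Cinv (rGamma z).

Definition Cderiv_at (f : R -> Cplx) (s : R) (d : Cplx) : Prop :=
  derivable_pt_lim (fun t => fst (f t)) s (fst d) /\
  derivable_pt_lim (fun t => snd (f t)) s (snd d).

Definition has_deriv (f f2 : R -> Cplx) : Prop :=
  forall s, 0 < s -> Cderiv_at f s (f2 s).

Definition sode (f r : R -> Cplx) : Prop :=
  forall s, 0 < s -> exists d, Cderiv_at f s d /\ Cmul (RtoC s) d = r s.

(* Main.v *)
Require Import Defs.
From Stdlib Require Import Reals List Lra.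
From Coquelicot Require Coquelicot.
Open Scope R_scope.
Module Aux.
Import Coquelicot.Coquelicot.
Local Open Scope C_scope.

Lemma e_add : Defs.Cadd = Cplus. Proof. reflexivity. Qed.
Lemma e_mul : Defs.Cmul = Cmult. Proof. reflexivity. Qed.
Lemma e_opp : Defs.Copp = Copp. Proof. reflexivity. Qed.
Lemma e_sub : Defs.Csub = Cminus. Proof. reflexivity. Qed.
Lemma e_inv : Defs.Cinv = Cinv. Proof. reflexivity. Qed.
Lemma e_div : Defs.Cdiv = Cdiv. Proof. reflexivity. Qed.
Lemma e_RtoC : Defs.RtoC = RtoC. Proof. reflexivity. Qed.
Lemma e_zero : Czero = RtoC 0. Proof. reflexivity. Qed.
Lemma e_one : Cone = RtoC 1. Proof. reflexivity. Qed.
Lemma e_Ci : Defs.Ci = Ci. Proof. reflexivity. Qed.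

Ltac toC := match goal with |- @eq _ ?a ?b => change (@eq C a b) end.
Ltac ringC := toC; ring.
Ltac fieldC := toC; field.
Ltac normC := rewrite ?e_add, ?e_mul, ?e_opp, ?e_sub, ?e_div, ?e_inv, ?e_RtoC, ?e_zero, ?e_one, ?e_Ci in *.

Lemma RtoC_neq (t : R) : t <> 0 -> RtoC t <> 0.
Proof. intros H E. injection E. auto. Qed.

Lemma dpl_eq f x l l' : derivable_pt_lim f x l -> l = l' -> derivable_pt_lim f x l'.
Proof. intros; subst; auto. Qed.

Lemma CD_eqv f s d d' : Cderiv_at f s d -> d = d' -> Cderiv_at f s d'.
Proof. intros; subst; auto. Qed.

Lemma CD_unique f s d d' : Cderiv_at f s d -> Cderiv_at f s d' -> d = d'.
Proof.
  destruct d as [a b], d' as [a' b']; intros [A B] [C D]; simpl in *.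
  f_equal; eapply uniqueness_limite; eauto.
Qed.

Lemma CD_plus f g s df dg : Cderiv_at f s df -> Cderiv_at g s dg ->
  Cderiv_at (fun t => f t + g t) s (df + dg).
Proof.
  intros [A B] [C D]; split.
  - exact (derivable_pt_lim_plus _ _ _ _ _ A C).
  - exact (derivable_pt_lim_plus _ _ _ _ _ B D).
Qed.

Lemma CD_opp f s df : Cderiv_at f s df -> Cderiv_at (fun t => - f t) s (- df).
Proof.
  intros [A B]; split.
  - exact (derivable_pt_lim_opp _ _ _ A).
  - exact (derivable_pt_lim_opp _ _ _ B).
Qed.

Lemma CD_minus f g s df dg : Cderiv_at f s df -> Cderiv_at g s dg ->
  Cderiv_at (fun t => f t - g t) s (df - dg).
Proof. intros A B. apply CD_plus; auto. apply CD_opp; auto. Qed.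

Lemma CD_mult f g s df dg : Cderiv_at f s df -> Cderiv_at g s dg ->
  Cderiv_at (fun t => f t * g t) s (df * g s + f s * dg).
Proof.
  intros [A B] [C D]; split.
  - eapply dpl_eq.
    + exact (derivable_pt_lim_minus _ _ _ _ _ (derivable_pt_lim_mult _ _ _ _ _ A C)
              (derivable_pt_lim_mult _ _ _ _ _ B D)).
    + simpl. ring.
  - eapply dpl_eq.
    + exact (derivable_pt_lim_plus _ _ _ _ _ (derivable_pt_lim_mult _ _ _ _ _ A D)
              (derivable_pt_lim_mult _ _ _ _ _ B C)).
    + simpl. ring.
Qed.

Lemma CD_const (c : C) s : Cderiv_at (fun _ => c) s (RtoC 0).
Proof. split; apply derivable_pt_lim_const. Qed.

Lemma CD_id s : Cderiv_at (fun t => RtoC t) s (RtoC 1).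
Proof. split; [apply derivable_pt_lim_id | apply derivable_pt_lim_const]. Qed.

Lemma CD_ext f g s d : 0 < s -> (forall t, 0 < t -> f t = g t) ->
  Cderiv_at g s d -> Cderiv_at f s d.
Proof.
  intros Hs E [A B].
  assert (L : forall h : C -> R, locally s (fun t => h (g t) = h (f t))).
  { intros h. exists (mkposreal s Hs). intros t Ht.
    unfold ball in Ht; simpl in Ht. unfold AbsRing_ball, abs, minus, plus, opp in Ht; simpl in Ht.
    apply Rabs_def2 in Ht. rewrite E; auto. lra. }
  split; apply is_derive_Reals.
  - eapply is_derive_ext_loc; [apply (L fst)|]. apply is_derive_Reals; auto.
  - eapply is_derive_ext_loc; [apply (L snd)|]. apply is_derive_Reals; auto.
Qed.

Lemma CD_zero_const (F : R -> C) : (forall t, 0 < t -> Cderiv_at F t (RtoC 0)) ->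
  forall a b, 0 < a -> 0 < b -> F a = F b.
Proof.
  intros H.
  assert (K : forall a b, 0 < a -> a < b -> F a = F b).
  { intros a b Ha Hab. apply injective_projections.
    - apply (eq_is_derive (fun t => fst (F t))); auto.
      intros t Ht. apply is_derive_Reals. destruct (H t ltac:(lra)) as [A _]. exact A.
    - apply (eq_is_derive (fun t => snd (F t))); auto.
      intros t Ht. apply is_derive_Reals. destruct (H t ltac:(lra)) as [_ A]. exact A. }
  intros a b Ha Hb. destruct (Rtotal_order a b) as [h|[h|h]].
  - auto.
  - subst; auto.
  - symmetry; auto.
Qed.

Lemma sode_deriv (f r : R -> C) : sode f r -> forall t, 0 < t -> Cderiv_at f t (r t / RtoC t).
Proof.
  intros H t Ht. destruct (H t Ht) as [d [Hd Heq]].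
  rewrite <- Heq. normC. replace (RtoC t * d / RtoC t) with d; auto.
  change Cplx with C in *. fieldC. apply RtoC_neq; lra.
Qed.

Lemma hd_at f g : has_deriv f g -> forall t, 0 < t -> Cderiv_at f t (g t).
Proof. intros H t Ht; apply H; auto. Qed.

Lemma lim0_iff (f : R -> C) (L : C) : lim0 f L <-> forall eps, 0 < eps -> exists delta, 0 < delta /\
    forall s, 0 < s < delta -> Cmod (f s - L) < eps.
Proof. split; intros H; exact H. Qed.

Lemma lim0_plus (f g : R -> C) (L M : C) : lim0 f L -> lim0 g M -> lim0 (fun s => f s + g s) (L + M).
Proof.
  rewrite !lim0_iff. intros Hf Hg eps He.
  destruct (Hf (eps/2)%R) as [d1 [H1 K1]]; [lra|].
  destruct (Hg (eps/2)%R) as [d2 [H2 K2]]; [lra|].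
  exists (Rmin d1 d2); split; [apply Rmin_pos; auto|].
  intros s Hs. assert (s < d1) by (eapply Rlt_le_trans; [apply Hs| apply Rmin_l]).
  assert (s < d2) by (eapply Rlt_le_trans; [apply Hs| apply Rmin_r]).
  replace (f s + g s - (L + M)) with ((f s - L) + (g s - M)) by ringC.
  eapply Rle_lt_trans; [apply Cmod_triangle|].
  specialize (K1 s ltac:(lra)); specialize (K2 s ltac:(lra)). lra.
Qed.

Lemma lim0_const (c : C) : lim0 (fun _ => c) c.
Proof.
  rewrite lim0_iff; intros eps He. exists 1; split; [lra|]. intros s _.
  replace (c - c) with (RtoC 0) by ringC. rewrite Cmod_0. auto.
Qed.

Lemma lim0_opp (f : R -> C) (L : C) : lim0 f L -> lim0 (fun s => - f s) (- L).
Proof.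
  rewrite !lim0_iff. intros Hf eps He. destruct (Hf eps He) as [d [Hd K]].
  exists d; split; auto. intros s Hs.
  replace (- f s - - L) with (- (f s - L)) by ringC. rewrite Cmod_opp. auto.
Qed.

Lemma lim0_minus (f g : R -> C) (L M : C) : lim0 f L -> lim0 g M -> lim0 (fun s => f s - g s) (L - M).
Proof. intros A B. apply lim0_plus; auto. apply lim0_opp; auto. Qed.

Lemma lim0_mult (f g : R -> C) (L M : C) : lim0 f L -> lim0 g M -> lim0 (fun s => f s * g s) (L * M).
Proof.
  rewrite !lim0_iff. intros Hf Hg eps He.
  set (k := (1 + Cmod L + Cmod M)%R).
  assert (Hk : 0 < k) by (unfold k; pose proof (Cmod_ge_0 L); pose proof (Cmod_ge_0 M); lra).
  set (e := Rmin 1 (eps / k)%R).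
  assert (He0 : 0 < e) by (apply Rmin_pos; [lra| apply Rdiv_lt_0_compat; auto]).
  assert (He1 : e <= 1) by apply Rmin_l.
  assert (He2 : (e * k <= eps)%R).
  { assert (e <= eps / k) by apply Rmin_r.
    apply Rmult_le_compat_r with (r := k) in H; [|lra].
    unfold Rdiv in H. rewrite Rmult_assoc, Rinv_l in H; lra. }
  destruct (Hf e He0) as [d1 [H1 K1]].
  destruct (Hg e He0) as [d2 [H2 K2]].
  exists (Rmin d1 d2); split; [apply Rmin_pos; auto|].
  intros s Hs. assert (s < d1) by (eapply Rlt_le_trans; [apply Hs| apply Rmin_l]).
  assert (s < d2) by (eapply Rlt_le_trans; [apply Hs| apply Rmin_r]).
  specialize (K1 s ltac:(lra)); specialize (K2 s ltac:(lra)).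
  replace (f s * g s - L * M) with ((f s - L) * (g s - M) + L * (g s - M) + (f s - L) * M) by ringC.
  eapply Rle_lt_trans; [apply Cmod_triangle|].
  eapply Rle_lt_trans; [apply Rplus_le_compat_r; apply Cmod_triangle|].
  rewrite !Cmod_mult.
  pose proof (Cmod_ge_0 L); pose proof (Cmod_ge_0 M);
  pose proof (Cmod_ge_0 (f s - L)); pose proof (Cmod_ge_0 (g s - M)).
  unfold k in He2. nra.
Qed.

Lemma lim0_unique_const (F : R -> C) (c L : C) : (forall t, 0 < t -> F t = c) -> lim0 F L -> c = L.
Proof.
  rewrite lim0_iff. intros E H.
  assert (Z : Cmod (c - L) = 0).
  { destruct (Req_dec (Cmod (c - L)) 0) as [h|h]; auto.
    pose proof (Cmod_ge_0 (c - L)).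
    destruct (H (Cmod (c - L))) as [d [Hd K]]; [lra|].
    specialize (K (d/2)%R ltac:(lra)). rewrite E in K by lra. lra. }
  apply Cmod_eq_0 in Z. replace c with ((c - L) + L) by ringC. rewrite Z. ringC.
Qed.

Lemma const_from (F : R -> C) (L : C) : (forall t, 0 < t -> Cderiv_at F t (RtoC 0)) -> lim0 F L ->
  forall t, 0 < t -> F t = L.
Proof.
  intros D H t Ht. apply (lim0_unique_const F (F t) L); auto.
  intros u Hu. apply CD_zero_const; auto.
Qed.


Lemma Cinv0 : Cinv (RtoC 0) = RtoC 0.
Proof. apply injective_projections; simpl; unfold Rdiv; ring. Qed.

Lemma lim_ratio (p q h : R -> C) : lim0 p Cone -> lim0 q Cone ->
  (forall s, 0 < s -> p s <> RtoC 0 -> q s <> RtoC 0 -> h s = q s / p s) -> lim0 h Cone.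
Proof.
  rewrite !lim0_iff. intros Hp Hq E eps He. rewrite e_one in *.
  destruct (Hp (Rmin (1/2) (eps/4))%R) as [d1 [H1 K1]]; [apply Rmin_pos; lra|].
  destruct (Hq (Rmin (1/2) (eps/4))%R) as [d2 [H2 K2]]; [apply Rmin_pos; lra|].
  exists (Rmin d1 d2); split; [apply Rmin_pos; auto|].
  intros s Hs. assert (s < d1) by (eapply Rlt_le_trans; [apply Hs| apply Rmin_l]).
  assert (s < d2) by (eapply Rlt_le_trans; [apply Hs| apply Rmin_r]).
  specialize (K1 s ltac:(lra)); specialize (K2 s ltac:(lra)).
  assert (m1 := Rmin_l (1/2) (eps/4)). assert (m2 := Rmin_r (1/2) (eps/4)).
  assert (Hpm : (1/2 < Cmod (p s))%R).
  { assert (T : Cmod (RtoC 1) <= Cmod (p s) + Cmod (RtoC 1 - p s)).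
    { replace (RtoC 1) with (p s + (RtoC 1 - p s)) at 1 by ringC. apply Cmod_triangle. }
    replace (RtoC 1 - p s) with (- (p s - RtoC 1)) in T by ringC. rewrite Cmod_opp in T.
    rewrite Cmod_1 in T. lra. }
  assert (Hqm : (1/2 < Cmod (q s))%R).
  { assert (T : Cmod (RtoC 1) <= Cmod (q s) + Cmod (RtoC 1 - q s)).
    { replace (RtoC 1) with (q s + (RtoC 1 - q s)) at 1 by ringC. apply Cmod_triangle. }
    replace (RtoC 1 - q s) with (- (q s - RtoC 1)) in T by ringC. rewrite Cmod_opp in T.
    rewrite Cmod_1 in T. lra. }
  assert (pn : p s <> RtoC 0) by (intro Z; rewrite Z, Cmod_0 in Hpm; lra).
  assert (qn : q s <> RtoC 0) by (intro Z; rewrite Z, Cmod_0 in Hqm; lra).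
  rewrite E by (auto; lra).
  replace (q s / p s - RtoC 1) with (((q s - RtoC 1) - (p s - RtoC 1)) / p s) by (fieldC; auto).
  rewrite Cmod_div by auto.
  assert (T : Cmod (q s - RtoC 1 - (p s - RtoC 1)) <= Cmod (q s - RtoC 1) + Cmod (p s - RtoC 1)).
  { eapply Rle_trans; [apply Cmod_triangle|]. rewrite Cmod_opp. lra. }
  apply Rlt_le_trans with ((eps/2) / (1/2))%R.
  - unfold Rdiv. apply Rle_lt_trans with (Cmod (q s - RtoC 1 - (p s - RtoC 1)) * / (1/2))%R.
    + apply Rmult_le_compat_l; [apply Cmod_ge_0|]. apply Rinv_le_contravar; lra.
    + apply Rmult_lt_compat_r; [lra|]. lra.
  - lra.
Qed.

Lemma Cexp_add a b : Cexp (a + b) = Cexp a * Cexp b.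
Proof.
  unfold Cexp; apply injective_projections; simpl; rewrite exp_plus, ?cos_plus, ?sin_plus; ring.
Qed.

Lemma Cexp_0 : Cexp (RtoC 0) = RtoC 1.
Proof. unfold Cexp; apply injective_projections; simpl; rewrite exp_0, ?cos_0, ?sin_0; ring. Qed.

Lemma Cpow_add s z w : Defs.Cpow s (z + w) = Defs.Cpow s z * Defs.Cpow s w.
Proof. unfold Defs.Cpow. rewrite <- Cexp_add. f_equal. normC. ringC. Qed.

Lemma Cpow_opp s z : Defs.Cpow s (- z) * Defs.Cpow s z = RtoC 1.
Proof. unfold Defs.Cpow. rewrite <- Cexp_add, <- Cexp_0. f_equal. normC. ringC. Qed.

Lemma Cpow_neq s z : Defs.Cpow s z <> RtoC 0.
Proof.
  intro Z. pose proof (Cpow_opp s z) as H. rewrite Z in H.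
  replace (Defs.Cpow s (- z) * RtoC 0) with (RtoC 0) in H by ringC.
  injection H. lra.
Qed.

Lemma claim2_gen (x0 y2 : R -> C) (g1 g2 g21 g12 n0 n1 n2 : C) :
  asym0 x0 (fun s => - (Ci * Defs.Cpow s (- n0)) / (g1 * g2)) ->
  asym0 y2 (fun s => Ci * g21 * Defs.Cpow s n1 / g1 + Ci * g12 * Defs.Cpow s n2 / g2) ->
  asym0 (fun s => y2 s / x0 s)
    (fun s => - (g21 * g2 * Defs.Cpow s (n1 + n0)) - g12 * g1 * Defs.Cpow s (n2 + n0)).
Proof.
  unfold asym0. intros Hx Hy.
  assert (Hg : g1 * g2 <> RtoC 0).
  { intro Z. rewrite lim0_iff in Hx. destruct (Hx 1%R ltac:(lra)) as [d [Hd K]].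
    specialize (K (d/2)%R ltac:(lra)). revert K. normC. unfold Cdiv at 2. rewrite Z, Cinv0.
    replace (- (Ci * Defs.Cpow (d / 2) (- n0)) * RtoC 0) with (RtoC 0) by ringC.
    unfold Cdiv; rewrite Cinv0.
    replace (x0 (d / 2)%R * RtoC 0 - RtoC 1) with (- RtoC 1) by ringC.
    rewrite Cmod_opp, Cmod_1. lra. }
  assert (g1n : g1 <> RtoC 0) by (intro Z; apply Hg; rewrite Z; ringC).
  assert (g2n : g2 <> RtoC 0) by (intro Z; apply Hg; rewrite Z; ringC).
  assert (Cin : Ci <> RtoC 0) by (intro Z; injection Z; lra).
  apply (lim_ratio _ _ _ Hx Hy).
  intros s Hs pn qn. cbv beta in *. normC.
  assert (P0n := Cpow_neq s n0).
  assert (Popp : Defs.Cpow s (- n0) = / Defs.Cpow s n0).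
  { replace (Defs.Cpow s (- n0)) with (Defs.Cpow s (- n0) * Defs.Cpow s n0 / Defs.Cpow s n0)
      by (fieldC; auto).
    rewrite Cpow_opp. fieldC. auto. }
  rewrite !Cpow_add. rewrite Popp in *.
  set (P0 := Defs.Cpow s n0) in *. set (P1 := Defs.Cpow s n1) in *. set (P2 := Defs.Cpow s n2) in *.
  set (Bs := Ci * g21 * P1 / g1 + Ci * g12 * P2 / g2) in *.
  set (As := - (Ci * / P0) / (g1 * g2)) in *.
  assert (Asn : As <> RtoC 0).
  { unfold As. intro Z. apply (f_equal (fun z => z * (g1 * g2) * P0 * Ci)) in Z.
    replace (- (Ci * / P0) / (g1 * g2) * (g1 * g2) * P0 * Ci) with (- (Ci * Ci)) in Z by (fieldC; auto).
    unfold Ci in Z. injection Z. intros. lra. }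
  assert (x0n : x0 s <> RtoC 0) by (intro Z; apply pn; rewrite Z; unfold Cdiv; ringC).
  assert (Bsn : Bs <> RtoC 0) by (intro Z; apply qn; unfold Cdiv; rewrite Z, Cinv0; ringC).
  assert (hT : - (g21 * g2 * (P1 * P0)) - g12 * g1 * (P2 * P0) = Bs / As).
  { unfold Bs, As. fieldC. auto. }
  rewrite hT. fieldC. auto.
Qed.


Lemma lin_solve (a b c x : C) : b <> RtoC 0 -> a = x * b + c -> x = (a - c) / b.
Proof. intros Hb E. subst a. fieldC. auto. Qed.

Lemma lin_solve2 (a b c x : C) : b <> RtoC 0 -> c + b * x = a -> x = (a - c) / b.
Proof. intros Hb E. subst a. fieldC. auto. Qed.

Lemma RtoC_34 : RtoC (3/4) = RtoC 3 / RtoC 4.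
Proof. apply injective_projections; simpl; field. Qed.

Ltac cd := repeat first [ eassumption | apply CD_minus | apply CD_plus | apply CD_opp
  | apply CD_mult | apply CD_id | apply CD_const ].
Ltac lm := repeat first [ eassumption | apply lim0_minus | apply lim0_plus | apply lim0_opp
  | apply lim0_mult | apply lim0_const ].

Lemma claim1 (x0 x1 x2 y0 y1 y2 xi0 xi1 xi2 eta0 eta1 eta2 : R -> C) (e1 e2 : C)
  (Sx0 : sode x0 (fun s => (- eta0 s * x0 s - x1 s)%C))
  (Sx1 : sode x1 (fun s => (- eta1 s * x0 s - x2 s)%C))
  (Sx2 : sode x2 (fun s => (- eta2 s * x0 s - RtoC s * x0 s + xi0 s * x0 s
                             + xi1 s * x1 s + xi2 s * x2 s)%C))
  (Sy2 : sode y2 (fun s => (- xi2 s * y2 s + y1 s)%C))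
  (Sy1 : sode y1 (fun s => (- xi1 s * y2 s + y0 s)%C))
  (Sy0 : sode y0 (fun s => (- xi0 s * y2 s + RtoC s * y2 s + eta0 s * y0 s
                             + eta1 s * y1 s + eta2 s * y2 s)%C))
  (Dxi1 : has_deriv xi1 (fun s => (- (x0 s * y1 s))%C))
  (Dxi2 : has_deriv xi2 (fun s => (- (x0 s * y2 s))%C))
  (Deta0 : has_deriv eta0 (fun s => (- (x0 s * y2 s))%C))
  (Deta1 : has_deriv eta1 (fun s => (- (x1 s * y2 s))%C))
  (Beta0 : lim0 eta0 Czero) (Beta1 : lim0 eta1 Czero)
  (Bxi1 : lim0 xi1 e2) (Bxi2 : lim0 xi2 (- e1)%C)
  (Bxy : forall f g, In f (x0 :: x1 :: x2 :: nil) -> In g (y0 :: y1 :: y2 :: nil) ->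
           lim0 (fun s => (f s * g s)%C) Czero /\
           lim0 (fun s => (RtoC s * (f s * g s))%C) Czero)
  (Hdeta0 : forall d1, has_deriv eta0 d1 -> forall s, 0 < s -> d1 s <> Czero)
  (Hy2 : forall s, 0 < s -> y2 s <> Czero) :
    (forall d1 d2 d3 g1 : R -> Cplx,
      has_deriv eta0 d1 -> has_deriv d1 d2 -> has_deriv d2 d3 ->
      has_deriv (fun s => (x0 s / y2 s)%C) g1 ->
      forall s, 0 < s ->
      let G := (x0 s / y2 s)%C in
      ((RtoC 3 * RtoC s * (g1 s / G) + RtoC 2 * e1) * (RtoC 3 * RtoC s * (g1 s / G) + RtoC 2 * e1) - RtoC 4 * (e1 * e1))%C
      = (RtoC 12 * (eta0 s - e2 - RtoC 3 * RtoC s * d1 s - RtoC s * (d2 s / d1 s))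
         - RtoC 12 * (RtoC s * RtoC s) * (d3 s / d1 s - RtoC (3/4) * ((d2 s / d1 s) * (d2 s / d1 s)))))%C.
Proof.
  pose proof (sode_deriv _ _ Sx0) as dx0. pose proof (sode_deriv _ _ Sx1) as dx1.
  pose proof (sode_deriv _ _ Sx2) as dx2. pose proof (sode_deriv _ _ Sy0) as dy0.
  pose proof (sode_deriv _ _ Sy1) as dy1. pose proof (sode_deriv _ _ Sy2) as dy2.
  cbv beta in dx0, dx1, dx2, dy0, dy1, dy2.
  pose proof (hd_at _ _ Dxi1) as dxi1. pose proof (hd_at _ _ Dxi2) as dxi2.
  pose proof (hd_at _ _ Deta0) as deta0. pose proof (hd_at _ _ Deta1) as deta1.
  cbv beta in dxi1, dxi2, deta0, deta1.
  assert (tn : forall t, 0 < t -> RtoC t <> RtoC 0) by (intros; apply RtoC_neq; lra).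
  assert (R1 : forall t, 0 < t -> xi2 t = eta0 t - e1).
  { assert (F := const_from (fun t => xi2 t - eta0 t) (- e1 - RtoC 0)).
    assert (P1 : forall u, 0 < u -> Cderiv_at (fun t => xi2 t - eta0 t) u (RtoC 0)).
    { intros u Hu; specialize (dxi2 u Hu); specialize (deta0 u Hu).
      eapply CD_eqv; [cd | ringC]. }
    assert (P2 : lim0 (fun t => xi2 t - eta0 t) (- e1 - RtoC 0)) by lm.
    intros t Ht. specialize (F P1 P2 t Ht). cbv beta in F.
    replace (xi2 t) with ((xi2 t - eta0 t) + eta0 t) by ringC. rewrite F. ringC. }
  assert (R2 : forall t, 0 < t -> x0 t * y0 t + x1 t * y1 t + x2 t * y2 t = RtoC 0).
  { assert (F := const_from (fun t => x0 t * y0 t + x1 t * y1 t + x2 t * y2 t)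
                  (RtoC 0 + RtoC 0 + RtoC 0)).
    assert (P1 : forall u, 0 < u -> Cderiv_at (fun t => x0 t * y0 t + x1 t * y1 t + x2 t * y2 t) u (RtoC 0)).
    { intros u Hu; specialize (dx0 u Hu); specialize (dx1 u Hu); specialize (dx2 u Hu);
      specialize (dy0 u Hu); specialize (dy1 u Hu); specialize (dy2 u Hu).
      eapply CD_eqv; [cd | fieldC; auto]. }
    assert (P2 : lim0 (fun t => x0 t * y0 t + x1 t * y1 t + x2 t * y2 t) (RtoC 0 + RtoC 0 + RtoC 0)).
    { apply lim0_plus; [apply lim0_plus|].
      - apply (Bxy x0 y0); simpl; auto.
      - apply (Bxy x1 y1); simpl; auto.
      - apply (Bxy x2 y2); simpl; auto. }
    intros t Ht. rewrite (F P1 P2 t Ht). ringC. }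
  assert (R3 : forall t, 0 < t -> eta1 t - xi1 t - RtoC t * (x0 t * y2 t) - eta0 t
                 + eta0 t * eta0 t - e1 * eta0 t = - e2).
  { assert (F := const_from (fun t => eta1 t - xi1 t - RtoC t * (x0 t * y2 t) - eta0 t
                 + eta0 t * eta0 t - e1 * eta0 t)
                 (RtoC 0 - e2 - RtoC 0 - RtoC 0 + RtoC 0 * RtoC 0 - e1 * RtoC 0)).
    assert (P1 : forall u, 0 < u -> Cderiv_at (fun t => eta1 t - xi1 t - RtoC t * (x0 t * y2 t) - eta0 t
                 + eta0 t * eta0 t - e1 * eta0 t) u (RtoC 0)).
    { intros u Hu; specialize (dx0 u Hu); specialize (dy2 u Hu); specialize (deta1 u Hu);
      specialize (dxi1 u Hu); specialize (deta0 u Hu).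
      eapply CD_eqv; [cd | rewrite (R1 u Hu); fieldC; auto]. }
    assert (L1 : lim0 (fun s => RtoC s * (x0 s * y2 s)) (RtoC 0)) by (apply (Bxy x0 y2); simpl; auto).
    assert (P2 : lim0 (fun t => eta1 t - xi1 t - RtoC t * (x0 t * y2 t) - eta0 t
                 + eta0 t * eta0 t - e1 * eta0 t)
                 (RtoC 0 - e2 - RtoC 0 - RtoC 0 + RtoC 0 * RtoC 0 - e1 * RtoC 0)) by lm.
    intros t Ht. rewrite (F P1 P2 t Ht). ringC. }
  intros d1 d2 d3 g1 Hd1 Hd2 Hd3 Hg1 s Hs G. unfold G; clear G.
  assert (hd1 : forall t, 0 < t -> d1 t = - (x0 t * y2 t)).
  { intros t Ht. exact (CD_unique _ _ _ _ (hd_at _ _ Hd1 t Ht) (deta0 t Ht)). }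
  assert (y2n : y2 s <> RtoC 0) by exact (Hy2 s Hs).
  assert (x0n : x0 s <> RtoC 0).
  { intro Z. apply (Hdeta0 d1 Hd1 s Hs). rewrite hd1 by auto. rewrite Z. normC. ringC. }
  assert (hd2 : forall t, 0 < t -> d2 t =
     - ((- eta0 t * x0 t - x1 t) / RtoC t * y2 t + x0 t * ((- xi2 t * y2 t + y1 t) / RtoC t))).
  { intros t Ht.
    specialize (dx0 t Ht); specialize (dy2 t Ht).
    eassert (B : Cderiv_at (fun u => - (x0 u * y2 u)) t _) by cd.
    assert (A : Cderiv_at (fun u => - (x0 u * y2 u)) t (d2 t)).
    { apply (CD_ext _ d1); [lra | intros u Hu; rewrite hd1; auto | apply (hd_at _ _ Hd2 t Ht)]. }
    exact (CD_unique _ _ _ _ A B). }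
  assert (hd3 := CD_mult _ _ _ _ _ (CD_id s) (hd_at _ _ Hd3 s Hs)).
  specialize (dx0 s Hs); specialize (dy2 s Hs); specialize (dx1 s Hs); specialize (dy1 s Hs);
  specialize (deta0 s Hs); specialize (dxi2 s Hs).
  eassert (B : Cderiv_at (fun u => - ((- eta0 u * x0 u - x1 u) * y2 u + x0 u * (- xi2 u * y2 u + y1 u))) s _) by cd.
  apply (CD_ext (fun u => RtoC u * d2 u)) in B; auto.
  2: { intros u Hu. rewrite hd2 by auto. fieldC. auto. }
  assert (E3 := CD_unique _ _ _ _ hd3 B). clear hd3 B.
  apply lin_solve2 in E3; auto.
  assert (Bg := CD_mult _ _ _ _ _ (hd_at _ _ Hg1 s Hs) dy2).
  apply (CD_ext x0) in Bg; auto.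
  2: { intros u Hu. normC. fieldC. auto. }
  assert (Eg := CD_unique _ _ _ _ dx0 Bg). clear Bg.
  apply lin_solve in Eg; auto.
  rewrite Eg, E3, hd2, hd1 by auto.
  assert (Ee1 : eta1 s = xi1 s + RtoC s * (x0 s * y2 s) + eta0 s - eta0 s * eta0 s + e1 * eta0 s - e2).
  { transitivity ((eta1 s - xi1 s - RtoC s * (x0 s * y2 s) - eta0 s + eta0 s * eta0 s - e1 * eta0 s)
      + xi1 s + RtoC s * (x0 s * y2 s) + eta0 s - eta0 s * eta0 s + e1 * eta0 s); [ringC|].
    rewrite (R3 s Hs). ringC. }
  assert (Ey0 : y0 s = - (x1 s * y1 s + x2 s * y2 s) / x0 s).
  { replace (y0 s) with ((x0 s * y0 s + x1 s * y1 s + x2 s * y2 s - (x1 s * y1 s + x2 s * y2 s)) / x0 s)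
      by (fieldC; auto).
    rewrite (R2 s Hs). fieldC. auto. }
  rewrite Ee1, Ey0, (R1 s Hs).
  normC. rewrite RtoC_34. fieldC. auto.
Qed.

End Aux.

Theorem mainTheorem10
  (nu0 nu1 nu2 : Cplx)
  (Hnu : forall k : Z, Csub nu2 nu1 <> RtoC (IZR k))
  (x0 x1 x2 y0 y1 y2 xi0 xi1 xi2 eta0 eta1 eta2 : R -> Cplx)
  (e1 e2 e3 : Cplx)
  (He1 : e1 = (nu0 + nu1 + nu2)%C)
  (He2 : e2 = (nu0 * nu1 + nu0 * nu2 + nu1 * nu2)%C)
  (He3 : e3 = (nu0 * nu1 * nu2)%C)
  (* the M = 2 system *)
  (Sx0 : sode x0 (fun s => (- eta0 s * x0 s - x1 s)%C))
  (Sx1 : sode x1 (fun s => (- eta1 s * x0 s - x2 s)%C))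
  (Sx2 : sode x2 (fun s => (- eta2 s * x0 s - RtoC s * x0 s + xi0 s * x0 s
                             + xi1 s * x1 s + xi2 s * x2 s)%C))
  (Sy2 : sode y2 (fun s => (- xi2 s * y2 s + y1 s)%C))
  (Sy1 : sode y1 (fun s => (- xi1 s * y2 s + y0 s)%C))
  (Sy0 : sode y0 (fun s => (- xi0 s * y2 s + RtoC s * y2 s + eta0 s * y0 s
                             + eta1 s * y1 s + eta2 s * y2 s)%C))
  (Dxi0 : has_deriv xi0 (fun s => (- (x0 s * y0 s))%C))
  (Dxi1 : has_deriv xi1 (fun s => (- (x0 s * y1 s))%C))
  (Dxi2 : has_deriv xi2 (fun s => (- (x0 s * y2 s))%C))
  (Deta0 : has_deriv eta0 (fun s => (- (x0 s * y2 s))%C))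
  (Deta1 : has_deriv eta1 (fun s => (- (x1 s * y2 s))%C))
  (Deta2 : has_deriv eta2 (fun s => (- (x2 s * y2 s))%C))
  (* boundary conditions (B) *)
  (Beta0 : lim0 eta0 Czero) (Beta1 : lim0 eta1 Czero) (Beta2 : lim0 eta2 Czero)
  (Bxi0 : lim0 xi0 (- e3)%C) (Bxi1 : lim0 xi1 e2) (Bxi2 : lim0 xi2 (- e1)%C)
  (Bxy : forall f g, In f (x0 :: x1 :: x2 :: nil) -> In g (y0 :: y1 :: y2 :: nil) ->
           lim0 (fun s => (f s * g s)%C) Czero /\
           lim0 (fun s => (RtoC s * (f s * g s))%C) Czero)
  (* nondegeneracy: eta0'(s) <> 0 and y2(s) <> 0 for s > 0 *)
  (Hdeta0 : forall d1, has_deriv eta0 d1 -> forall s, 0 < s -> d1 s <> Czero)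
  (Hy2 : forall s, 0 < s -> y2 s <> Czero)
  : (* first claim, with G := x0 / y2 *)
    (forall d1 d2 d3 g1 : R -> Cplx,
      has_deriv eta0 d1 -> has_deriv d1 d2 -> has_deriv d2 d3 ->
      has_deriv (fun s => (x0 s / y2 s)%C) g1 ->
      forall s, 0 < s ->
      let G := (x0 s / y2 s)%C in
      ((RtoC 3 * RtoC s * (g1 s / G) + RtoC 2 * e1) ^2 - RtoC 4 * e1 ^2)%C
      = (RtoC 12 * (eta0 s - e2 - RtoC 3 * RtoC s * d1 s - RtoC s * (d2 s / d1 s))
         - RtoC 12 * (RtoC s) ^2 * (d3 s / d1 s - RtoC (3/4) * (d2 s / d1 s) ^2))%C)
    /\
    (* second claim: asymptotics of G^{-1} = y2 / x0 *)
    (asym0 x0 (fun s => (- (Ci * Cpow s (- nu0)) /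
                 (Gamma (nu1 - nu0 + Cone) * Gamma (nu2 - nu0 + Cone)))%C) ->
     asym0 y2 (fun s => (Ci * Gamma (nu2 - nu1) * Cpow s nu1 / Gamma (nu1 - nu0 + Cone)
                 + Ci * Gamma (nu1 - nu2) * Cpow s nu2 / Gamma (nu2 - nu0 + Cone))%C) ->
     asym0 (fun s => (y2 s / x0 s)%C)
           (fun s => (- (Gamma (nu2 - nu1) * Gamma (nu2 - nu0 + Cone) * Cpow s (nu1 + nu0))
                      - Gamma (nu1 - nu2) * Gamma (nu1 - nu0 + Cone) * Cpow s (nu2 + nu0))%C)).
Proof.
  split.
  - exact (Aux.claim1 x0 x1 x2 y0 y1 y2 xi0 xi1 xi2 eta0 eta1 eta2 e1 e2 Sx0 Sx1 Sx2 Sy2 Sy1 Sy0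
             Dxi1 Dxi2 Deta0 Deta1 Beta0 Beta1 Bxi1 Bxi2 Bxy Hdeta0 Hy2).
  - exact (Aux.claim2_gen x0 y2 _ _ _ _ nu0 nu1 nu2).
Qed.

Print Assumptions mainTheorem10.
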